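(* In the setting described in the context, for any sequence of constant pairs $(\eta_{n,1},\eta_{n,2})_{n=0}^{n_0}\in\mathbb{C}^{2(n_0+1)}$ the following are equivalent: (1) there exists a solution $\varphi$ on $\mathbb{R}$ of $(P-\lambda)\varphi=0$ with $\varphi=\eta_{n,1}g_n+\eta_{n,2}\bar g_n$ for every $n=0,1,\dots,n_0$; (2) the state $\Psi$ given by $\Psi(n)=(\eta_{n,1},\eta_{n-1,2})^T$ for $1\le n\le n_0$, $\Psi(-\infty)=\eta_{0,1}$, $\Psi(+\infty)=\eta_{n_0,2}$ satisfies $\mathcal{U}\Psi=\Psi$.
   Context: Let $h>0$, $P(h)=-h^2\frac{d^2}{dx^2}+V(x)$ on $\mathbb{R}$ with $V$ continuous and real-valued, and fix $\lambda>0$. Let $n_0\ge2$ and let $g_0,\dots,g_{n_0}$ be solutions of $(P-\lambda)g=0$ on $\mathbb{R}$ such that each pair $(g_n,\bar g_n)$ is a basis of the solution space, the Wronskian $\mathcal{W}(g_n,\bar g_n)$ is independent of $n$, and $(g_{n-1},\bar g_n)$ is linearly independent for each $1\le n\le n_0$. Define $T_n$ ($1\le n\le n_0$) by $(g_{n-1},\bar g_{n-1})T_n=(g_n,\bar g_n)$; then $T_n\in\mathcal{T}:=\{T=(t_{jk})\in SL(2,\mathbb{C}): t_{11}=\overline{t_{22}},\ t_{12}=\overline{t_{21}}\}$. Define $\mathcal{M}:\mathcal{T}\to\mathcal{S}:=\{M\in U(2): m_{11}=m_{22}\ne0\}$ by $\mathcal{M}\begin{pmatrix}p&\bar q\\ q&\bar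 p\end{pmatrix}=\frac1{\bar p}\begin{pmatrix}1&\bar q\\-q&1\end{pmatrix}$ and $U_n:=\mathcal{M}(T_n)$. Set $P_n:=\begin{pmatrix}1&0\\0&0\end{pmatrix}U_n$, $Q_n:=\begin{pmatrix}0&0\\0&1\end{pmatrix}U_n$. A state $\Psi$ consists of $\Psi(n)=(\Psi_1(n),\Psi_2(n))^T\in\mathbb{C}^2$ for $1\le n\le n_0$ and scalars $\Psi(\pm\infty)\in\mathbb{C}$. The evolution $\mathcal{U}$ is: $(\mathcal{U}\Psi)(n)=P_{n+1}\Psi(n+1)+Q_{n-1}\Psi(n-1)$ for $2\le n\le n_0-1$; $(\mathcal{U}\Psi)(-\infty)=(1,0)U_1\Psi(1)$; $(\mathcal{U}\Psi)(+\infty)=(0,1)U_{n_0}\Psi(n_0)$; $(\mathcal{U}\Psi)(1)=P_2\Psi(2)+(0,\Psi_2(1))^T$; $(\mathcal{U}\Psi)(n_0)=(\Psi_1(n_0),0)^T+Q_{n_0-1}\Psi(n_0-1)$. *)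

(* Defs.v *)
From Stdlib Require Import Reals Arith.
From Coquelicot Require Import Coquelicot.
Open Scope R_scope.

Notation CC := Complex.C.

Definition conjf (f : R -> CC) : R -> CC := fun x => Cconj (f x).

(* f solves (P - lam) f = 0 on R, with P = -h^2 d^2/dx^2 + V *)
Definition is_sol (h : R) (V : R -> R) (lam : R) (f : R -> CC) : Prop :=
  exists f' f'' : R -> CC,
    forall x, is_derive f x (f' x) /\ is_derive f' x (f'' x) /\
      (- RtoC (h ^ 2) * f'' x + RtoC (V x) * f x = RtoC lam * f x)%C.

Definition lin_indep (f1 f2 : R -> CC) : Prop :=
  forall a b : CC, (forall x, (a * f1 x + b * f2 x)%C = (RtoC 0)) -> a = (RtoC 0) /\ b = (RtoC 0).

Definition is_basis h V lam (f1 f2 : R -> CC) : Prop :=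
  is_sol h V lam f1 /\ is_sol h V lam f2 /\ lin_indep f1 f2 /\
  forall phi, is_sol h V lam phi ->
    exists a b : CC, forall x, phi x = (a * f1 x + b * f2 x)%C.

Definition wronskian_is (f g w : R -> CC) : Prop :=
  forall x, exists fx gx : CC,
    is_derive f x fx /\ is_derive g x gx /\ w x = (f x * gx - fx * g x)%C.

Record mat2 := Mat2 { m11 : CC; m12 : CC; m21 : CC; m22 : CC }.

Definition mulv (M : mat2) (v : CC * CC) : CC * CC :=
  ((m11 M * fst v + m12 M * snd v)%C, (m21 M * fst v + m22 M * snd v)%C).

Definition addv (v w : CC * CC) : CC * CC := ((fst v + fst w)%C, (snd v + snd w)%C).

Definition transfer_rel (gprev gnext : R -> CC) (T : mat2) : Prop :=
  forall x,
    gnext x = (gprev x * m11 T + Cconj (gprev x) * m21 T)%C /\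
    Cconj (gnext x) = (gprev x * m12 T + Cconj (gprev x) * m22 T)%C.

(* M [[p, conj q],[q, conj p]] = (1 / conj p) [[1, conj q],[-q, 1]],
   written with the entries of T: conj p = t22, conj q = t12, q = t21. *)
Definition scatM (T : mat2) : mat2 :=
  Mat2 (/ m22 T)%C (/ m22 T * m12 T)%C (/ m22 T * - m21 T)%C (/ m22 T)%C.

Definition Pproj (M : mat2) (v : CC * CC) : CC * CC := (fst (mulv M v), (RtoC 0)).
Definition Qproj (M : mat2) (v : CC * CC) : CC * CC := ((RtoC 0), snd (mulv M v)).

Record state := State { psi : nat -> CC * CC; psi_minf : CC; psi_pinf : CC }.

Definition evolve (n0 : nat) (T : nat -> mat2) (S : state) : state :=
  let U n := scatM (T n) in
  State
    (fun n =>
       if Nat.eqb n 1 then addv (Pproj (U 2%nat) (psi S 2%nat)) ((RtoC 0), snd (psi S 1%nat))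
       else if Nat.eqb n n0 then addv (fst (psi S n0), (RtoC 0)) (Qproj (U (n0 - 1)%nat) (psi S (n0 - 1)%nat))
       else addv (Pproj (U (n + 1)%nat) (psi S (n + 1)%nat)) (Qproj (U (n - 1)%nat) (psi S (n - 1)%nat)))
    (fst (mulv (U 1%nat) (psi S 1%nat)))
    (snd (mulv (U n0) (psi S n0))).

Definition state_eq (n0 : nat) (S1 S2 : state) : Prop :=
  (forall n, (1 <= n <= n0)%nat -> psi S1 n = psi S2 n) /\
  psi_minf S1 = psi_minf S2 /\ psi_pinf S1 = psi_pinf S2.

Definition state_of (n0 : nat) (eta : nat -> CC * CC) : state :=
  State (fun n => (fst (eta n), snd (eta (n - 1)%nat))) (fst (eta 0%nat)) (snd (eta n0)).

(* Main.v *)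
Require Import Defs.
From Stdlib Require Import Reals Arith Lra Lia Classical.
From Coquelicot Require Import Coquelicot.
Open Scope R_scope.

Lemma is_derive_lin {V W : NormedModule R_AbsRing} (L : V -> W) (f : R -> V) x l :
  is_linear L -> is_derive f x l -> is_derive (fun t => L (f t)) x (L l).
Proof.
  intros HL Hf. unfold is_derive in *.
  eapply filterdiff_ext_lin.
  - apply filterdiff_comp; [exact Hf|]. apply filterdiff_linear. exact HL.
  - intros y. simpl. apply (linear_scal L HL).
Qed.

Lemma abs_le_sqrt a b : Rabs a <= sqrt (Rabs a * (Rabs a * 1) + Rabs b * (Rabs b * 1)).
Proof.
  rewrite <- (sqrt_Rsqr (Rabs a)) at 1 by apply Rabs_pos.
  apply sqrt_le_1_alt. unfold Rsqr.
  assert (0 <= Rabs b * Rabs b) by (apply Rmult_le_pos; apply Rabs_pos). nra.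
Qed.

Lemma normC (z : CC) : @norm _ C_R_NormedModule z =
   sqrt (Rabs (fst z) * (Rabs (fst z) * 1) + Rabs (snd z) * (Rabs (snd z) * 1)).
Proof. destruct z. reflexivity. Qed.

Lemma normC' (z : CC) : @norm _ C_R_NormedModule z = Cmod z.
Proof.
  rewrite normC. unfold Cmod. f_equal.
  replace (Rabs (fst z) * (Rabs (fst z) * 1) + Rabs (snd z) * (Rabs (snd z) * 1))
    with (Rabs (fst z) ^ 2 + Rabs (snd z) ^ 2) by ring.
  rewrite !pow2_abs. reflexivity.
Qed.

Lemma fst_lin : is_linear (U:=C_R_NormedModule) (V:=R_NormedModule) (fun z : CC => fst z).
Proof.
  split.
  - intros; reflexivity.
  - intros; reflexivity.
  - exists 1. split; [lra|]. intros [a b]. rewrite normC. simpl.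
    rewrite Rmult_1_l. apply abs_le_sqrt.
Qed.

Lemma snd_lin : is_linear (U:=C_R_NormedModule) (V:=R_NormedModule) (fun z : CC => snd z).
Proof.
  split.
  - intros; reflexivity.
  - intros; reflexivity.
  - exists 1. split; [lra|]. intros [a b]. rewrite normC. simpl.
    rewrite Rmult_1_l. rewrite Rplus_comm. apply abs_le_sqrt.
Qed.

Lemma mulC_lin (a : CC) : is_linear (U:=C_R_NormedModule) (V:=C_R_NormedModule) (fun z : CC => (a * z)%C).
Proof.
  split.
  - intros x y. change (a * (x + y) = a * x + a * y)%C. ring.
  - intros k x. destruct a, x. unfold scal; simpl. unfold prod_scal; simpl.
    unfold Cmult; simpl. unfold scal; simpl. unfold mult; simpl. f_equal; ring.
  - exists (Cmod a + 1). split. { pose proof (Cmod_ge_0 a). lra. }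
    intros x. rewrite !normC'. rewrite Cmod_mult.
    apply Rmult_le_compat_r; [apply Cmod_ge_0| ].
    lra.
Qed.

Lemma dpl_eq f g x l l' : (forall z, f z = g z) -> l = l' -> derivable_pt_lim f x l -> derivable_pt_lim g x l'.
Proof. intros H <- D. exact (derivable_pt_lim_ext f g x l H D). Qed.

Lemma dexpE (u u1 u2 : R -> R) a x0 t :
  is_derive u t (u1 t) -> is_derive u1 t (u2 t) ->
  is_derive (fun t => (u t * u t + u1 t * u1 t) * exp (a * (t - x0))) t
    ((2 * u t * u1 t + 2 * u1 t * u2 t + a * (u t * u t + u1 t * u1 t)) * exp (a * (t - x0))).
Proof.
  intros H1 H2. apply is_derive_Reals in H1. apply is_derive_Reals in H2.
  apply is_derive_Reals.
  assert (He : derivable_pt_lim (fun t => exp (a * (t - x0))) t (exp (a * (t - x0)) * a)).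
  { apply (derivable_pt_lim_comp (fun t => a * (t - x0)) exp t a).
    - apply (dpl_eq (mult_real_fct a (fun t => id t - fct_cte x0 t)) _ _ (a * (1 - 0))).
      + intros z. reflexivity.
      + ring.
      + apply derivable_pt_lim_scal. apply derivable_pt_lim_minus; [apply derivable_pt_lim_id | apply derivable_pt_lim_const].
    - apply derivable_pt_lim_exp. }
  pose proof (derivable_pt_lim_mult _ _ _ _ _ H1 H1) as M1.
  pose proof (derivable_pt_lim_mult _ _ _ _ _ H2 H2) as M2.
  pose proof (derivable_pt_lim_plus _ _ _ _ _ M1 M2) as P.
  pose proof (derivable_pt_lim_mult _ _ _ _ _ P He) as Q.
  unfold mult_fct, plus_fct in Q.
  match type of Q with derivable_pt_lim _ _ ?l =>
    replace ((2 * u t * u1 t + 2 * u1 t * u2 t + a * (u t * u t + u1 t * u1 t)) * exp (a * (t - x0))) with l by ring end.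
  exact Q.
Qed.

Lemma ode_uniq (k u u1 u2 : R -> R) x0 :
  (forall x, continuity_pt k x) ->
  (forall x, is_derive u x (u1 x)) -> (forall x, is_derive u1 x (u2 x)) ->
  (forall x, u2 x = k x * u x) -> u x0 = 0 -> u1 x0 = 0 -> forall x, u x = 0.
Proof.
  intros Hk H1 H2 Heq Hu0 Hu10 x.
  set (r := Rabs (x - x0) + 1).
  assert (Hr : x0 - r <= x0 + r) by (unfold r; pose proof (Rabs_pos (x - x0)); lra).
  destruct (continuity_ab_maj (fun c => Rabs (k c)) (x0 - r) (x0 + r) Hr) as [Mx [HM _]].
  { intros c _. apply (continuity_pt_comp k Rabs); [apply Hk | apply Rcontinuity_abs]. }
  set (M := Rabs (k Mx)) in *.
  assert (HM0 : 0 <= M) by apply Rabs_pos.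
  set (Cc := 1 + M).
  set (E := fun t => u t * u t + u1 t * u1 t).
  assert (Hbound : forall c, Rabs (c - x0) <= Rabs (x - x0) ->
     Rabs (2 * u c * u1 c + 2 * u1 c * u2 c) <= Cc * E c).
  { intros c Hc. rewrite Heq.
    assert (Hkc : Rabs (k c) <= M).
    { apply HM. unfold r. apply Rabs_le_between' in Hc. lra. }
    replace (2 * u c * u1 c + 2 * u1 c * (k c * u c)) with ((2 * u c * u1 c) * (1 + k c)) by ring.
    rewrite Rabs_mult.
    assert (Rabs (2 * u c * u1 c) <= E c).
    { unfold E. apply Rabs_le. pose proof (pow2_ge_0 (u c + u1 c)); pose proof (pow2_ge_0 (u c - u1 c)). split; nra. }
    assert (Rabs (1 + k c) <= Cc).
    { unfold Cc. eapply Rle_trans; [apply Rabs_triang|]. rewrite Rabs_R1. lra. }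
    assert (0 <= E c) by (unfold E; nra).
    rewrite Rmult_comm. apply Rmult_le_compat; auto using Rabs_pos. }
  assert (Hmain : forall a, (forall c, Rabs (c - x0) <= Rabs (x - x0) ->
     (2 * u c * u1 c + 2 * u1 c * u2 c + a * E c) * (x - x0) <= 0) ->
     u x = 0).
  { intros a Ha.
    destruct (MVT_cor4 (fun t => (u t * u t + u1 t * u1 t) * exp (a * (t - x0)))
      (fun t => (2 * u t * u1 t + 2 * u1 t * u2 t + a * (u t * u t + u1 t * u1 t)) * exp (a * (t - x0)))
      x0 r) with (b := x) as [c [Hc1 Hc2]].
    { intros c _. apply dexpE; auto. }
    { unfold r; lra. }
    rewrite Hu0, Hu10 in Hc1.
    pose proof (Ha c Hc2) as Hac. fold (E c) in Hc1.
    pose proof (exp_pos (a * (c - x0))) as Ep1. pose proof (exp_pos (a * (x - x0))) as Ep2.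
    assert (Hle : (u x * u x + u1 x * u1 x) * exp (a * (x - x0)) <= 0).
    { replace ((u x * u x + u1 x * u1 x) * exp (a * (x - x0))) with
        ((2 * u c * u1 c + 2 * u1 c * u2 c + a * E c) * (x - x0) * exp (a * (c - x0))).
      2:{ replace (0 * 0 + 0 * 0) with 0 in Hc1 by ring. rewrite Rmult_0_l, Rminus_0_r in Hc1.
          rewrite Hc1. ring. }
      apply Rmult_le_0_r; lra. }
    assert (HE : u x * u x + u1 x * u1 x <= 0).
    { destruct (Rle_or_lt (u x * u x + u1 x * u1 x) 0) as [Hq|Hq]; auto.
      exfalso. pose proof (Rmult_lt_0_compat _ _ Hq Ep2). lra. }
    nra. }
  destruct (Rle_or_lt x0 x) as [Hx|Hx].
  - apply (Hmain (- Cc)). intros c Hc. pose proof (Hbound c Hc).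
    apply Rabs_le_between in H. apply Rmult_le_0_r; [|lra].
    assert (0 <= x - x0) by lra. lra.
  - apply (Hmain Cc). intros c Hc. pose proof (Hbound c Hc).
    apply Rabs_le_between in H.
    assert (0 <= 2 * u c * u1 c + 2 * u1 c * u2 c + Cc * E c) by lra.
    assert (x - x0 < 0) by lra. nra.
Qed.

Lemma dmul (f : R -> CC) x l (a : CC) : is_derive f x l -> is_derive (fun t => (a * f t)%C) x (a * l)%C.
Proof. intros H. exact (is_derive_lin (fun z : CC => (a * z)%C) f x l (mulC_lin a) H). Qed.

Lemma dfst (f : R -> CC) x l : is_derive f x l -> is_derive (fun t => fst (f t)) x (fst l).
Proof. intros H. exact (is_derive_lin (fun z : CC => fst z) f x l fst_lin H). Qed.

Lemma dsnd (f : R -> CC) x l : is_derive f x l -> is_derive (fun t => snd (f t)) x (snd l).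
Proof. intros H. exact (is_derive_lin (fun z : CC => snd z) f x l snd_lin H). Qed.

Lemma dplus (f g : R -> CC) x l1 l2 : is_derive f x l1 -> is_derive g x l2 ->
  is_derive (fun t => (f t + g t)%C) x (l1 + l2)%C.
Proof. intros H1 H2. exact (is_derive_plus f g x l1 l2 H1 H2). Qed.

Lemma duniq (f : R -> CC) x l1 l2 : is_derive f x l1 -> is_derive f x l2 -> l1 = l2.
Proof.
  intros H1 H2.
  pose proof (is_derive_unique _ _ _ (dfst _ _ _ H1)) as A1.
  pose proof (is_derive_unique _ _ _ (dfst _ _ _ H2)) as A2.
  pose proof (is_derive_unique _ _ _ (dsnd _ _ _ H1)) as B1.
  pose proof (is_derive_unique _ _ _ (dsnd _ _ _ H2)) as B2.
  destruct l1, l2; simpl in *. f_equal; congruence.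
Qed.

Lemma sol_comb h V lam f g (a b : CC) : is_sol h V lam f -> is_sol h V lam g ->
  is_sol h V lam (fun x => (a * f x + b * g x)%C).
Proof.
  intros [f1 [f2 Hf]] [g1 [g2 Hg]].
  exists (fun x => (a * f1 x + b * g1 x)%C), (fun x => (a * f2 x + b * g2 x)%C).
  intros x. destruct (Hf x) as [Hf1 [Hf2 Hf3]]. destruct (Hg x) as [Hg1 [Hg2 Hg3]].
  split; [|split].
  - apply dplus; apply dmul; auto.
  - apply dplus; apply dmul; auto.
  - transitivity (a * (- RtoC (h ^ 2) * f2 x + RtoC (V x) * f x) + b * (- RtoC (h ^ 2) * g2 x + RtoC (V x) * g x))%C.
    + ring.
    + rewrite Hf3, Hg3. ring.
Qed.

Lemma real_eq (h vx lam : R) (F F2 : CC) : h <> 0 ->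
  (- RtoC (h ^ 2) * F2 + RtoC vx * F = RtoC lam * F)%C ->
  fst F2 = (vx - lam) / h ^ 2 * fst F /\ snd F2 = (vx - lam) / h ^ 2 * snd F.
Proof.
  intros Hh E. destruct F as [p q], F2 as [p2 q2].
  apply (f_equal (fun z => (fst z, snd z))) in E.
  unfold Cmult, Cplus, Copp, RtoC in E; simpl in E. injection E as E1 E2.
  simpl. assert (H2 : h ^ 2 <> 0) by (apply pow_nonzero; auto).
  assert (HA : h ^ 2 * p2 = (vx - lam) * p) by lra.
  assert (HB : h ^ 2 * q2 = (vx - lam) * q) by lra.
  split.
  - transitivity (h ^ 2 * p2 / h ^ 2); [field; auto | rewrite HA; field; auto].
  - transitivity (h ^ 2 * q2 / h ^ 2); [field; auto | rewrite HB; field; auto].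
Qed.

Lemma sol_zero h V lam f x0 : 0 < h -> (forall x, continuous V x) -> is_sol h V lam f ->
  f x0 = RtoC 0 -> is_derive f x0 (RtoC 0) -> forall x, f x = RtoC 0.
Proof.
  intros Hh HV [f1 [f2 Hf]] Hx0 Hd x.
  assert (Hf10 : f1 x0 = RtoC 0) by (apply (duniq f x0); [apply Hf | exact Hd]).
  assert (Hk : forall x, continuity_pt (fun x => (V x - lam) / h ^ 2) x).
  { intros y. apply (continuity_pt_div (fun x => V x - lam) (fun _ => h ^ 2)).
    - apply continuity_pt_minus; [ | apply continuity_pt_const; intros ? ?; reflexivity].
      apply continuity_pt_filterlim. apply HV.
    - apply continuity_pt_const; intros ? ?; reflexivity.
    - apply pow_nonzero; lra. }
  assert (Hh0 : h <> 0) by lra.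
  assert (E1 : fst (f x) = 0).
  { apply (ode_uniq (fun x => (V x - lam) / h ^ 2) (fun t => fst (f t)) (fun t => fst (f1 t)) (fun t => fst (f2 t)) x0 Hk).
    - intros y. apply dfst. apply Hf.
    - intros y. apply dfst. apply Hf.
    - intros y. destruct (Hf y) as [_ [_ E]]. apply (real_eq h (V y) lam _ _ Hh0 E).
    - rewrite Hx0; reflexivity.
    - rewrite Hf10; reflexivity. }
  assert (E2 : snd (f x) = 0).
  { apply (ode_uniq (fun x => (V x - lam) / h ^ 2) (fun t => snd (f t)) (fun t => snd (f1 t)) (fun t => snd (f2 t)) x0 Hk).
    - intros y. apply dsnd. apply Hf.
    - intros y. apply dsnd. apply Hf.
    - intros y. destruct (Hf y) as [_ [_ E]]. apply (real_eq h (V y) lam _ _ Hh0 E).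
    - rewrite Hx0; reflexivity.
    - rewrite Hf10; reflexivity. }
  destruct (f x) as [p q]. simpl in *. subst. reflexivity.
Qed.

Lemma Cneg_ne (u : CC) : u <> RtoC 0 -> (- u)%C <> RtoC 0.
Proof. intros H E. apply H. replace u with (- (- u))%C by ring. rewrite E. ring. Qed.

Lemma dep_pair (u1 u2 v1 v2 : CC) : (u1 * v2 - u2 * v1 = RtoC 0)%C ->
  exists a b : CC, (a <> RtoC 0 \/ b <> RtoC 0) /\ (a * u1 + b * v1 = RtoC 0)%C /\ (a * u2 + b * v2 = RtoC 0)%C.
Proof.
  intros D.
  destruct (classic (u1 = RtoC 0 /\ v1 = RtoC 0)) as [[H1 H2]|H].
  - destruct (classic (u2 = RtoC 0 /\ v2 = RtoC 0)) as [[H3 H4]|H'].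
    + exists (RtoC 1), (RtoC 0). split; [left; intros E; injection E; lra|].
      subst; split; ring.
    + exists v2, (- u2)%C. split.
      * apply not_and_or in H'. destruct H'; [right; apply Cneg_ne | left]; auto.
      * subst; split; ring.
  - exists v1, (- u1)%C. split.
    * apply not_and_or in H. destruct H; [right; apply Cneg_ne | left]; auto.
    * split; [ring|]. transitivity (- (u1 * v2 - u2 * v1))%C; [ring|]. rewrite D. ring.
Qed.

Lemma wr_nonzero h V lam f g x0 fx gx : 0 < h -> (forall x, continuous V x) ->
  is_sol h V lam f -> is_sol h V lam g -> lin_indep f g ->
  is_derive f x0 fx -> is_derive g x0 gx -> (f x0 * gx - fx * g x0)%C <> RtoC 0.
Proof.
  intros Hh HV Sf Sg Hi Df Dg Hw.
  destruct (dep_pair (f x0) fx (g x0) gx Hw) as [a [b [Hab [E1 E2]]]].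
  assert (Z : forall x, (a * f x + b * g x)%C = RtoC 0).
  { apply (sol_zero h V lam _ x0 Hh HV (sol_comb h V lam f g a b Sf Sg)).
    - exact E1.
    - rewrite <- E2. apply dplus; apply dmul; auto. }
  destruct (Hi a b Z). destruct Hab; contradiction.
Qed.

Definition Sa T eta k := fst (mulv (scatM (T k)) (fst (eta k), snd (eta (k-1)%nat))) = fst (eta (k-1)%nat).
Definition Sb T eta k := snd (mulv (scatM (T k)) (fst (eta k), snd (eta (k-1)%nat))) = snd (eta k).

Lemma pair_eq (a b : CC * CC) : fst a = fst b -> snd a = snd b -> a = b.
Proof. destruct a, b; simpl; intros; subst; reflexivity. Qed.

Lemma addC0 (z : CC) : (z + RtoC 0)%C = z.
Proof. destruct z; unfold Cplus, RtoC; simpl; f_equal; ring. Qed.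
Lemma add0C (z : CC) : (RtoC 0 + z)%C = z.
Proof. destruct z; unfold Cplus, RtoC; simpl; f_equal; ring. Qed.

Lemma state_iff n0 T (eta : nat -> CC * CC) : (2 <= n0)%nat ->
  (state_eq n0 (evolve n0 T (state_of n0 eta)) (state_of n0 eta) <->
   forall k, (1 <= k <= n0)%nat -> Sa T eta k /\ Sb T eta k).
Proof.
  intros Hn0. split.
  - intros [Hpsi [Hm Hp]] k Hk. split.
    + unfold Sa. destruct (Nat.eq_dec k 1) as [->|Hk1].
      * exact Hm.
      * specialize (Hpsi (k-1)%nat ltac:(lia)). unfold evolve, state_of in Hpsi; simpl psi in Hpsi.
        destruct (Nat.eqb_spec (k-1) 1) as [E|E].
        -- apply (f_equal fst) in Hpsi. simpl in Hpsi.
           assert (k = 2%nat) by lia. subst k. simpl in *. rewrite addC0 in Hpsi. exact Hpsi.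
        -- destruct (Nat.eqb_spec (k-1) n0) as [E'|E']; [lia|].
           apply (f_equal fst) in Hpsi. simpl in Hpsi.
           replace (k - 1 + 1)%nat with k in Hpsi by lia. rewrite ?addC0, ?add0C in Hpsi; exact Hpsi.
    + unfold Sb. destruct (Nat.eq_dec k n0) as [->|Hk1].
      * exact Hp.
      * specialize (Hpsi (k+1)%nat ltac:(lia)). unfold evolve, state_of in Hpsi; simpl psi in Hpsi.
        destruct (Nat.eqb_spec (k+1) 1) as [E|E]; [lia|].
        destruct (Nat.eqb_spec (k+1) n0) as [E'|E'].
        -- apply (f_equal snd) in Hpsi. simpl in Hpsi.
           replace (n0 - 1)%nat with k in Hpsi by lia.
           replace (k + 1 - 1)%nat with k in Hpsi by lia. rewrite ?addC0, ?add0C in Hpsi; exact Hpsi.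
        -- apply (f_equal snd) in Hpsi. simpl in Hpsi.
           replace (k + 1 - 1)%nat with k in Hpsi by lia. rewrite ?addC0, ?add0C in Hpsi; exact Hpsi.
  - intros H. split; [intros n Hn | split].
    + unfold evolve, state_of; simpl psi.
      destruct (Nat.eqb_spec n 1) as [E|E].
      * subst n. destruct (H 2%nat ltac:(lia)) as [A _]. unfold Sa in A. simpl in A.
        apply pair_eq; simpl.
        -- rewrite addC0; exact A.
        -- apply add0C.
      * destruct (Nat.eqb_spec n n0) as [E'|E'].
        -- subst n. destruct (H (n0-1)%nat ltac:(lia)) as [_ B]. unfold Sb in B.
           apply pair_eq; simpl.
           ++ apply addC0.
           ++ rewrite add0C; exact B.
        -- destruct (H (n+1)%nat ltac:(lia)) as [A _]. destruct (H (n-1)%nat ltac:(lia)) as [_ B].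
           unfold Sa in A; unfold Sb in B.
           replace (n + 1 - 1)%nat with n in A by lia.
           apply pair_eq; simpl.
           replace (n + 1 - 1)%nat with n by lia.
           ++ rewrite addC0; exact A.
           ++ rewrite add0C; exact B.
    + simpl. destruct (H 1%nat ltac:(lia)) as [A _]. exact A.
    + simpl. destruct (H n0 ltac:(lia)) as [_ B]. exact B.
Qed.

Lemma SR (M : mat2) (x1 x2 y1 y2 : CC) : m22 M <> RtoC 0 ->
  (m11 M * m22 M - m12 M * m21 M = RtoC 1)%C ->
  ((fst (mulv (scatM M) (x1, y2)) = y1 /\ snd (mulv (scatM M) (x1, y2)) = x2) <->
   (y1 = m11 M * x1 + m12 M * x2 /\ y2 = m21 M * x1 + m22 M * x2)%C).
Proof.
  destruct M as [a b c e]. unfold mulv, scatM; simpl. intros He Hd.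
  assert (Ha : a = ((RtoC 1 + b * c) / e)%C) by (rewrite <- Hd; field; auto).
  subst a. split; intros [H1 H2].
  - subst y1 x2. split; field; auto.
  - subst y1 y2. split; field; auto.
Qed.

Lemma coef_uniq f1 f2 (a b c d : CC) : lin_indep f1 f2 ->
  (forall x, (a * f1 x + b * f2 x = c * f1 x + d * f2 x)%C) -> a = c /\ b = d.
Proof.
  intros Hi H. destruct (Hi (a - c)%C (b - d)%C) as [E1 E2].
  - intros x. transitivity ((a * f1 x + b * f2 x) - (c * f1 x + d * f2 x))%C; [ring|].
    rewrite H. ring.
  - split.
    + replace a with ((a - c) + c)%C by ring. rewrite E1. ring.
    + replace b with ((b - d) + d)%C by ring. rewrite E2. ring.
Qed.

Lemma eq_one (x w : CC) : (x * w = w)%C -> w <> RtoC 0 -> x = RtoC 1.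
Proof.
  intros H Hw. replace x with (x * w / w)%C by (field; auto). rewrite H. field; auto.
Qed.

Lemma ceq (a b : CC) : a = b -> a = b.
Proof. auto. Qed.

Theorem mainTheorem4 (h : R) (V : R -> R) (lam : R) (n0 : nat)
  (g : nat -> R -> CC) (T : nat -> mat2) (eta : nat -> CC * CC) :
  0 < h ->
  (forall x, continuous V x) ->
  0 < lam ->
  (2 <= n0)%nat ->
  (forall n, (n <= n0)%nat -> is_basis h V lam (g n) (conjf (g n))) ->
  (exists w : R -> CC, forall n, (n <= n0)%nat -> wronskian_is (g n) (conjf (g n)) w) ->
  (forall n, (1 <= n <= n0)%nat -> lin_indep (g (n - 1)%nat) (conjf (g n))) ->
  (forall n, (1 <= n <= n0)%nat -> transfer_rel (g (n - 1)%nat) (g n) (T n)) ->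
  ((exists phi : R -> CC, is_sol h V lam phi /\
      forall n, (n <= n0)%nat -> forall x,
        phi x = (fst (eta n) * g n x + snd (eta n) * Cconj (g n x))%C)
   <->
   state_eq n0 (evolve n0 T (state_of n0 eta)) (state_of n0 eta)).
Proof.
  intros Hh HV Hlam Hn0 Hbas [w Hw] Hli Htr.
  assert (Ht22 : forall n, (1 <= n <= n0)%nat -> m22 (T n) <> RtoC 0).
  { intros n Hn E. destruct (Hli n Hn (m12 (T n)) (- RtoC 1)%C) as [_ Hb].
    - intros x. destruct (Htr n Hn x) as [_ Hc]. unfold conjf. rewrite Hc, E. ring.
    - apply (f_equal fst) in Hb; simpl in Hb; lra. }
  assert (Hdet : forall n, (1 <= n <= n0)%nat ->
             (m11 (T n) * m22 (T n) - m12 (T n) * m21 (T n) = RtoC 1)%C).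
  { intros n Hn.
    destruct (Hw (n-1)%nat ltac:(lia) 0) as [fx' [gx' [Df' [Dg' Ew']]]].
    destruct (Hw n ltac:(lia) 0) as [fx [gx [Df [Dg Ew]]]].
    destruct (Hbas (n-1)%nat ltac:(lia)) as [S1 [S2 [Li _]]].
    assert (Efx : fx = (m11 (T n) * fx' + m21 (T n) * gx')%C).
    { apply (duniq (g n) 0); [exact Df|].
      eapply is_derive_ext; [|apply dplus; apply dmul; [exact Df' | exact Dg']].
      intros t. simpl. destruct (Htr n Hn t) as [A _]. rewrite A. unfold conjf. apply ceq. ring. }
    assert (Egx : gx = (m12 (T n) * fx' + m22 (T n) * gx')%C).
    { apply (duniq (conjf (g n)) 0); [exact Dg|].
      eapply is_derive_ext; [|apply dplus; apply dmul; [exact Df' | exact Dg']].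
      intros t. simpl. destruct (Htr n Hn t) as [_ B]. unfold conjf. rewrite B. apply ceq. ring. }
    pose proof (wr_nonzero h V lam _ _ 0 fx' gx' Hh HV S1 S2 Li Df' Dg') as NZ.
    rewrite <- Ew' in NZ.
    apply (eq_one _ (w 0)); auto.
    rewrite Ew' at 1. rewrite Ew, Efx, Egx. destruct (Htr n Hn 0) as [A B]. unfold conjf. rewrite B, A. ring. }
  assert (HR : forall k, (1 <= k <= n0)%nat ->
     (Sa T eta k /\ Sb T eta k <->
      (fst (eta (k-1)%nat) = m11 (T k) * fst (eta k) + m12 (T k) * snd (eta k) /\
       snd (eta (k-1)%nat) = m21 (T k) * fst (eta k) + m22 (T k) * snd (eta k))%C)).
  { intros k Hk. unfold Sa, Sb. apply SR; auto. }
  rewrite state_iff by exact Hn0.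
  split.
  - intros [phi [Sphi Hphi]] k Hk. apply HR; auto.
    destruct (Hbas (k-1)%nat ltac:(lia)) as [_ [_ [Li _]]].
    apply (coef_uniq _ _ _ _ _ _ Li).
    intros x. unfold conjf. rewrite <- (Hphi (k-1)%nat ltac:(lia) x).
    rewrite (Hphi k ltac:(lia) x). destruct (Htr k Hk x) as [A B]. rewrite B, A. ring.
  - intros HS.
    exists (fun x => (fst (eta n0) * g n0 x + snd (eta n0) * Cconj (g n0 x))%C). split.
    + destruct (Hbas n0 ltac:(lia)) as [S1 [S2 _]]. exact (sol_comb _ _ _ _ _ _ _ S1 S2).
    + assert (Hm : forall m, (m <= n0)%nat -> forall x,
        (fst (eta n0) * g n0 x + snd (eta n0) * Cconj (g n0 x))%C =
        (fst (eta (n0 - m)%nat) * g (n0 - m)%nat x + snd (eta (n0 - m)%nat) * Cconj (g (n0 - m)%nat x))%C).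
      { induction m as [|m IH]; intros Hm x.
        - rewrite Nat.sub_0_r. reflexivity.
        - rewrite IH by lia.
          assert (Hk : (1 <= n0 - m <= n0)%nat) by lia.
          destruct (proj1 (HR _ Hk) (HS _ Hk)) as [E1 E2].
          replace (n0 - S m)%nat with (n0 - m - 1)%nat by lia.
          destruct (Htr _ Hk x) as [A B]. rewrite B, A, E1, E2. ring. }
      intros n Hn x. rewrite (Hm (n0 - n)%nat ltac:(lia) x).
      replace (n0 - (n0 - n))%nat with n by lia. reflexivity.
Qed.
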